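(* Let $\Gamma$ be a weighted digraph with vertex set $\{1,\dots,n\}$, $n>1$, without loops and with strictly positive arc weights, with Laplacian matrix $L$, matrices of in-forests $Q_k$ and in-forest weights $\sigma_k$. Then for every $k=0,1,2,\dots$, $$Q_{k+1}=(-L)Q_k+\sigma_{k+1}I,\qquad \sigma_{k+1}=\frac{\operatorname{tr}(LQ_k)}{k+1}.$$
   Context: $W=(w_{ij})$ is the matrix of arc weights ($w_{ij}>0$ iff there is an arc $i\to j$, else $0$). The Laplacian $L=(\ell_{ij})$: $\ell_{ij}=-w_{ij}$ for $j\ne i$, $\ell_{ii}=\sum_{k\ne i}w_{ik}$. The weight of a subgraph is the product of its arc weights (1 if no arcs); the weight of a set of subgraphs is the sum of their weights (0 for the empty set). A converging tree is a weakly connected digraph with one vertex (the root) of outdegree 0 and all others of outdegree 1; an in-forest is a spanning subgraph of $\Gamma$ whose weak components are converging trees. $\sigma_k$ is the total weight of in-forests of $\Gamma$ with $k$ arcs ($\sigma_0=1$, and $\sigma_k=0$ when no such in-forest exists). $Q_k=(q^k_{ij})$ where $q^k_{ij}$ is the total weight of in-forests with $k$ arcs in which $i$ lies in a tree rooted at $j$ ($Q_0=I$, and $Q_k=0$ when no in-forest with $k$ arcs exists). *)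

(* Defs.v *)
From mathcomp Require Import all_boot all_order all_algebra.
Set Implicit Arguments. Unset Strict Implicit. Unset Printing Implicit Defensive.
Import Order.TTheory GRing.Theory Num.Theory.
Local Open Scope ring_scope.

Section Forests.
Variables (R : realFieldType) (n : nat) (W : 'M[R]_n).

(* A spanning subgraph of Gamma is given by its set of arcs F. *)
Definition arcs_of_graph : {set 'I_n * 'I_n} := [set e | 0 < W e.1 e.2].

Definition outdeg (F : {set 'I_n * 'I_n}) (i : 'I_n) : nat :=
  #|[set j | (i, j) \in F]|.

Definition wrel (F : {set 'I_n * 'I_n}) : rel 'I_n :=
  fun i j => ((i, j) \in F) || ((j, i) \in F).

Definition wcomp (F : {set 'I_n * 'I_n}) (i : 'I_n) : {set 'I_n} :=
  [set j | connect (wrel F) i j].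

(* F is an in-forest of Gamma: a spanning subgraph each of whose weak
   components is a converging tree (exactly one vertex of outdegree 0,
   all other vertices of outdegree 1). *)
Definition is_inforest (F : {set 'I_n * 'I_n}) : bool :=
  (F \subset arcs_of_graph) &&
  [forall i, (#|[set r in wcomp F i | outdeg F r == 0%N]| == 1%N) &&
             [forall v in wcomp F i, (outdeg F v <= 1)%N]].

Definition sg_weight (F : {set 'I_n * 'I_n}) : R := \prod_(e in F) W e.1 e.2.

Definition sigma (k : nat) : R :=
  \sum_(F : {set 'I_n * 'I_n} | is_inforest F && (#|F| == k)) sg_weight F.

Definition rooted_at (F : {set 'I_n * 'I_n}) (i j : 'I_n) : bool :=
  (j \in wcomp F i) && (outdeg F j == 0%N).

Definition Qmat (k : nat) : 'M[R]_n :=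
  \matrix_(i, j) \sum_(F : {set 'I_n * 'I_n} |
                        [&& is_inforest F, #|F| == k & rooted_at F i j])
                    sg_weight F.

Definition laplacian : 'M[R]_n :=
  \matrix_(i, j) if i == j then \sum_(k | k != i) W i k else - W i j.

End Forests.

(* Main.v *)
Require Import Defs.
From mathcomp Require Import all_boot all_order all_algebra.
From mathcomp Require Import lra ring.
Set Implicit Arguments. Unset Strict Implicit. Unset Printing Implicit Defensive.
Import Order.TTheory GRing.Theory Num.Theory.
Local Open Scope ring_scope.

Section Aux.
Variables (R : realFieldType) (n : nat) (W : 'M[R]_n).
Hypothesis Hloop : forall i, W i i = 0.
Hypothesis Hpos : forall i j, 0 <= W i j.

Local Notation E := {set 'I_n * 'I_n}.

Definition succ (F : E) (v : 'I_n) : option 'I_n := [pick j | (v, j) \in F].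
Definition gF (F : E) (v : 'I_n) : 'I_n := odflt v (succ F v).
Definition sink (F : E) v : bool := succ F v == None.
Definition rootF (F : E) v := iter n (gF F) v.
Definition acyc (F : E) := [forall v, sink F (rootF F v)].
Definition outle1 (F : E) := [forall v, (outdeg F v <= 1)%N].
Definition forest (F : E) := [&& F \subset arcs_of_graph W, outle1 F & acyc F].

Lemma outle1P (F : E) : reflect (forall v j j', (v, j) \in F -> (v, j') \in F -> j = j') (outle1 F).
Proof.
apply: (iffP forallP) => H.
  move=> v j j' Hj Hj'; have /card_le1P H1 := H v.
  have Hj1 : j \in [set j | (v, j) \in F] by rewrite inE.
  have := H1 _ Hj1 j'; rewrite !inE Hj' => /esym/eqP; done.
move=> v; apply/card_le1P => j; rewrite inE => Hj j'; rewrite inE.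
apply/idP/eqP => [Hj'|->//]; exact: H Hj' Hj.
Qed.

Lemma succ_none (F : E) v : (succ F v == None) = [forall j, (v, j) \notin F].
Proof.
rewrite /succ; case: pickP => [j Hj|H] /=.
  by apply/esym/forallP => /(_ j); rewrite Hj.
by apply/esym/forallP => j; rewrite H.
Qed.

Lemma succ_some (F : E) v j : outle1 F -> (succ F v == Some j) = ((v, j) \in F).
Proof.
move=> /outle1P H; rewrite /succ; case: pickP => [j' Hj'|H0] /=.
  apply/eqP/idP => [[<-]//|Hj]; congr Some; exact: H Hj' Hj.
by rewrite H0.
Qed.

Lemma succ_in (F : E) v j : succ F v = Some j -> (v, j) \in F.
Proof. by rewrite /succ; case: pickP => // j' Hj' [<-]. Qed.

Lemma outdeg0 (F : E) v : (outdeg F v == 0%N) = sink F v.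
Proof.
rewrite /outdeg cards_eq0 /sink succ_none; apply/eqP/forallP => [H j|H].
  apply/negP => Hj; have : j \in [set j | (v, j) \in F] by rewrite inE.
  by rewrite H inE.
by apply/setP => j; rewrite !inE; apply/negbTE.
Qed.

Lemma sink_g (F : E) v : sink F v -> gF F v = v.
Proof. by rewrite /sink /gF => /eqP ->. Qed.

Lemma nsink_g (F : E) v : ~~ sink F v -> (v, gF F v) \in F.
Proof. by rewrite /sink /gF; case E1: (succ F v) => [j|] //= _; exact: succ_in. Qed.

Lemma iter_fix (g : 'I_n -> 'I_n) y s : g y = y -> iter s g y = y.
Proof. by move=> Hy; elim: s => //= s ->. Qed.

Lemma iter_sink_le (F : E) v t s : sink F (iter t (gF F) v) -> (t <= s)%N ->
  iter s (gF F) v = iter t (gF F) v.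
Proof.
move=> Hs /subnK <-; rewrite iterD; apply: iter_fix; exact: sink_g.
Qed.

Lemma pigeon (F : E) v t : sink F (iter t (gF F) v) -> sink F (iter n (gF F) v).
Proof.
move=> Hs; set y := iter t (gF F) v.
have Hc : fconnect (gF F) v y by exact: fconnect_iter.
have Hf := iter_findex Hc.
have Hlt : (findex (gF F) v y < n)%N.
  apply: (leq_trans (findex_max Hc)); rewrite /order.
  by apply: leq_trans (max_card _) _; rewrite card_ord.
by rewrite (@iter_sink_le F v (findex (gF F) v y) n) ?Hf //; exact: ltnW.
Qed.

Lemma root_sink (F : E) v : acyc F -> sink F (rootF F v).
Proof. by move/forallP. Qed.

Lemma rootF_g (F : E) v : acyc F -> rootF F (gF F v) = rootF F v.
Proof.
move=> Ha; rewrite /rootF -iterSr iterS; apply: sink_g; exact: root_sink.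
Qed.

Lemma rootF_iter (F : E) v t : acyc F -> rootF F (iter t (gF F) v) = rootF F v.
Proof. by move=> Ha; elim: t => //= t IH; rewrite rootF_g. Qed.

Lemma rootF_sinkv F v : sink F v -> rootF F v = v.
Proof. by move=> H; apply: iter_fix; exact: sink_g. Qed.

Lemma periodic_sink (F : E) v t : acyc F -> iter t.+1 (gF F) v = v -> sink F v.
Proof.
move=> Ha Hp.
have Hq : forall q, iter (t.+1 * q) (gF F) v = v.
  by elim=> [|q IH]; rewrite ?muln0 // mulnS iterD IH.
have := root_sink v Ha; rewrite /rootF.
rewrite -(@iter_sink_le F v n (t.+1 * n)) ?Hq //.
- exact: root_sink.
- exact: leq_pmull.
Qed.

Lemma noreach_succ (F : E) i t : acyc F -> ~~ sink F i -> iter t (gF F) (gF F i) != i.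
Proof.
move=> Ha Hi; apply/eqP => H; move/negP: Hi; apply.
by apply: (periodic_sink (t := t)) => //; rewrite iterSr.
Qed.

Lemma iter_agree (g g' : 'I_n -> 'I_n) i v t :
  (forall u, u != i -> g' u = g u) -> (forall s, (s < t)%N -> iter s g v != i) ->
  iter t g' v = iter t g v.
Proof.
move=> Hg; elim: t => //= t IH Hs.
rewrite IH => [|s Hst]; last by apply: Hs; exact: ltnW.
by apply: Hg; apply: Hs.
Qed.

Lemma noreachP (g : 'I_n -> 'I_n) m i : reflect (forall t, iter t g m != i) (~~ fconnect g m i).
Proof.
apply: (iffP idP) => [H t|H].
  by apply/eqP => Ht; move/negP: H; apply; rewrite -Ht; exact: fconnect_iter.
by apply/negP => /iter_findex Hf; move: (H (findex g m i)); rewrite Hf eqxx.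
Qed.


Lemma closed_step (F : E) : outle1 F -> forall u w, (u, w) \in F ->
  sink F (rootF F u) = sink F (rootF F w).
Proof.
move=> Ho u w Huw.
have Hg : gF F u = w by rewrite /gF; move: Huw; rewrite -succ_some // => /eqP ->.
rewrite /rootF -Hg -iterSr; apply/idP/idP => H.
  by rewrite (@iter_sink_le F u n n.+1).
exact: pigeon H.
Qed.

Lemma inforest_forest (F : E) : is_inforest W F = forest F.
Proof.
apply/idP/idP.
  move/andP=> [Hsub /forallP Hall].
  have Ho : outle1 F.
    apply/forallP => v; have /andP[_ /forallP H2] := Hall v.
    by move: (H2 v) => /implyP; apply; rewrite inE connect0.
  rewrite /forest Hsub Ho /=; apply/forallP => z.
  have /andP[/cards1P [r Hr] _] := Hall z.
  have : r \in [set r0 in wcomp F z | outdeg F r0 == 0%N] by rewrite Hr set11.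
  rewrite !inE outdeg0 => /andP[Hc Hs].
  have Hcl : closed (wrel F) [pred v | sink F (rootF F v)].
    move=> x y; rewrite /wrel !inE => /orP[H|H]; first exact: closed_step.
    by apply/esym; exact: closed_step.
  by have := closed_connect Hcl Hc; rewrite !inE (rootF_sinkv Hs) Hs => ->.
move=> /and3P[Hsub Ho Ha]; rewrite /is_inforest Hsub /=.
have Hcon : forall i v, connect (wrel F) i v -> rootF F v = rootF F i.
  move=> i v Hc.
  have Hcl : closed (wrel F) [pred x | rootF F x == rootF F i].
    move=> x y; rewrite /wrel !inE => /orP[H|H].
      have Hg : gF F x = y by rewrite /gF; move: H; rewrite -succ_some // => /eqP ->.
      by rewrite -Hg rootF_g.
    have Hg : gF F y = x by rewrite /gF; move: H; rewrite -succ_some // => /eqP ->.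
    by rewrite -Hg rootF_g.
  by have := closed_connect Hcl Hc; rewrite !inE eqxx => /esym/eqP.
have Hreach : forall i t, connect (wrel F) i (iter t (gF F) i).
  move=> i; elim=> [|t IH]; first exact: connect0.
  apply: (connect_trans IH); rewrite iterS; set u := iter t (gF F) i.
  case Hs: (sink F u); first by rewrite sink_g ?connect0.
  by apply: connect1; rewrite /wrel nsink_g ?Hs.
apply/forallP => i; apply/andP; split.
  suff -> : [set r in wcomp F i | outdeg F r == 0%N] = [set rootF F i] by rewrite cards1.
  apply/setP => r; rewrite !inE outdeg0; apply/andP/eqP => [[Hc Hs]|->].
    by rewrite -(Hcon i r Hc) rootF_sinkv.
  by split; [exact: Hreach | exact: root_sink].
by apply/forallP => v; apply/implyP => _; move/forallP: Ho; apply.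
Qed.

Lemma rooted_forest (F : E) i j : forest F -> rooted_at F i j = (rootF F i == j).
Proof.
move=> /and3P[Hsub Ho Ha]; rewrite /rooted_at /wcomp inE outdeg0.
have Hcon : forall v, connect (wrel F) i v -> rootF F v = rootF F i.
  move=> v Hc.
  have Hcl : closed (wrel F) [pred x | rootF F x == rootF F i].
    move=> x y; rewrite /wrel !inE => /orP[H|H].
      have Hg : gF F x = y by rewrite /gF; move: H; rewrite -succ_some // => /eqP ->.
      by rewrite -Hg rootF_g.
    have Hg : gF F y = x by rewrite /gF; move: H; rewrite -succ_some // => /eqP ->.
    by rewrite -Hg rootF_g.
  by have := closed_connect Hcl Hc; rewrite !inE eqxx => /esym/eqP.
have Hreach : forall t, connect (wrel F) i (iter t (gF F) i).
  elim=> [|t IH]; first exact: connect0.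
  apply: (connect_trans IH); rewrite iterS; set u := iter t (gF F) i.
  case Hs: (sink F u); first by rewrite sink_g ?connect0.
  by apply: connect1; rewrite /wrel nsink_g ?Hs.
apply/andP/eqP => [[Hc Hs]|<-].
  by rewrite -(Hcon j Hc) rootF_sinkv.
by split; [exact: Hreach | exact: root_sink].
Qed.


Definition rem (F : E) i : E := [set e in F | e.1 != i].
Definition mdf (F : E) i m : E := (i, m) |: rem F i.

Lemma succ_rem_ne (F : E) i v : v != i -> succ (rem F i) v = succ F v.
Proof. by move=> Hv; apply: eq_pick => j /=; rewrite !inE /= Hv andbT. Qed.

Lemma sink_rem_i (F : E) i : sink (rem F i) i.
Proof. by rewrite /sink succ_none; apply/forallP => j; rewrite !inE /= eqxx andbF. Qed.

Lemma succ_mdf_ne (F : E) i m v : v != i -> succ (mdf F i m) v = succ F v.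
Proof.
move=> Hv; apply: eq_pick => j /=; rewrite !inE /= Hv andbT.
by rewrite xpair_eqE (negbTE Hv).
Qed.

Lemma succ_mdf_i (F : E) i m : succ (mdf F i m) i = Some m.
Proof.
rewrite /succ; case: pickP => [j|H] /=.
  by rewrite !inE /= eqxx andbF orbF xpair_eqE eqxx /= => /eqP ->.
by move: (H m); rewrite !inE eqxx.
Qed.

Lemma gF_rem_ne (F : E) i v : v != i -> gF (rem F i) v = gF F v.
Proof. by move=> Hv; rewrite /gF succ_rem_ne. Qed.
Lemma gF_rem_i (F : E) i : gF (rem F i) i = i.
Proof. exact: sink_g (sink_rem_i F i). Qed.
Lemma gF_mdf_ne (F : E) i m v : v != i -> gF (mdf F i m) v = gF F v.
Proof. by move=> Hv; rewrite /gF succ_mdf_ne. Qed.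
Lemma gF_mdf_i (F : E) i m : gF (mdf F i m) i = m.
Proof. by rewrite /gF succ_mdf_i. Qed.
Lemma sink_rem_ne (F : E) i v : v != i -> sink (rem F i) v = sink F v.
Proof. by move=> Hv; rewrite /sink succ_rem_ne. Qed.
Lemma sink_mdf_ne (F : E) i m v : v != i -> sink (mdf F i m) v = sink F v.
Proof. by move=> Hv; rewrite /sink succ_mdf_ne. Qed.
Lemma nsink_mdf_i (F : E) i m : ~~ sink (mdf F i m) i.
Proof. by rewrite /sink succ_mdf_i. Qed.

Lemma outle1_rem (F : E) i : outle1 F -> outle1 (rem F i).
Proof.
move/outle1P => H; apply/outle1P => v j j'; rewrite !inE => /andP[H1 _] /andP[H2 _].
exact: H H1 H2.
Qed.

Lemma outle1_mdf (F : E) i m : outle1 F -> outle1 (mdf F i m).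
Proof.
move/outle1P => H; apply/outle1P => v j j'; rewrite !inE /= !xpair_eqE.
case/orP => [/andP[/eqP-> /eqP->]|/andP[H1 Hv1]].
  by case/orP => [/andP[_ /eqP->]|/andP[_]] //=; rewrite eqxx.
case/orP => [/andP[/eqP Hv _]|/andP[H2 _]]; first by rewrite /= Hv eqxx in Hv1.
exact: H H1 H2.
Qed.

Lemma sub_rem (F : E) i : F \subset arcs_of_graph W -> rem F i \subset arcs_of_graph W.
Proof. by move=> H; apply: subset_trans H; apply/subsetP => e; rewrite inE => /andP[]. Qed.

Lemma sub_mdf (F : E) i m : F \subset arcs_of_graph W -> 0 < W i m ->
  mdf F i m \subset arcs_of_graph W.
Proof.
move=> H Hw; apply/subsetP => e; rewrite !inE => /orP[/eqP->|/andP[He _]].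
  by rewrite ?inE.
by move: (subsetP H _ He); rewrite inE.
Qed.

Lemma rem_sink (F : E) i : sink F i -> rem F i = F.
Proof.
rewrite /sink succ_none => /forallP H; apply/setP => [[u v]]; rewrite !inE /=.
case: (eqVneq u i) => [->|]; last by rewrite andbT.
by rewrite andbF; apply/esym/negbTE; exact: H.
Qed.

Lemma mdf_self (F : E) i m : outle1 F -> succ F i = Some m -> mdf F i m = F.
Proof.
move=> Ho Hs; apply/setP => [[u v]]; rewrite !inE /= xpair_eqE.
case: (eqVneq u i) => [->|] /=; last by rewrite andbT.
rewrite andbF orbF -succ_some // Hs.
by apply/eqP/eqP => [->|[->]].
Qed.

Lemma rem_mdf (F : E) i m : rem (mdf F i m) i = rem F i.
Proof.
apply/setP => [[u v]]; rewrite !inE /= xpair_eqE.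
by case: (eqVneq u i) => [->|] /=; rewrite ?andbF ?andbT.
Qed.

Lemma notin_rem (F : E) i m : (i, m) \notin rem F i.
Proof. by rewrite !inE /= eqxx andbF. Qed.

Lemma card_mdf (F : E) i m : #|mdf F i m| = (#|rem F i|).+1.
Proof. by rewrite cardsU1 notin_rem. Qed.

Lemma wt_mdf (F : E) i m : sg_weight W (mdf F i m) = W i m * sg_weight W (rem F i).
Proof. by rewrite /sg_weight big_setU1 ?notin_rem. Qed.


Lemma first_hit (g : 'I_n -> 'I_n) v i : fconnect g v i ->
  exists2 s, iter s g v = i & forall s', (s' < s)%N -> iter s' g v != i.
Proof.
move=> Hc; have Hex : exists s, iter s g v == i by exists (findex g v i); rewrite iter_findex.
case: (ex_minnP Hex) => s /eqP Hs Hmin; exists s => // s' Hs'.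
by apply/negP => /Hmin; rewrite leqNgt Hs'.
Qed.

Section Mdf.
Variables (F : E) (i m : 'I_n).
Hypotheses (HF : forest F) (Hw : 0 < W i m) (Hnr : ~~ fconnect (gF F) m i).

Let F' := mdf F i m.
Let Hag : forall u, u != i -> gF F' u = gF F u.
Proof. by move=> u Hu; rewrite gF_mdf_ne. Qed.
Let Hm : forall t, iter t (gF F) m != i.
Proof. exact/noreachP. Qed.
Let Hm' : forall t, iter t (gF F') m = iter t (gF F) m.
Proof. by move=> t; apply: iter_agree Hag _ => s _; exact: Hm. Qed.

Lemma mdf_forest : forest F'.
Proof.
move: HF => /and3P[Hsub Ho Ha].
rewrite /forest sub_mdf // outle1_mdf //=; apply/forallP => v.
case: (boolP (fconnect (gF F) v i)) => Hc.
  case: (first_hit Hc) => s Hs Hmin.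
  have Hsv : iter s (gF F') v = i by rewrite (iter_agree Hag Hmin).
  apply: (@pigeon F' v (n + s.+1)); rewrite iterD iterS Hsv gF_mdf_i Hm'.
  by rewrite sink_mdf_ne ?Hm //; exact: root_sink.
have /noreachP Hv := Hc.
rewrite /rootF (iter_agree Hag (fun s _ => Hv s)) sink_mdf_ne ?Hv //.
exact: root_sink.
Qed.

Lemma mdf_root_i : rootF F' i = rootF F m.
Proof.
have /and3P[_ _ Ha'] := mdf_forest.
rewrite /rootF -(@iter_sink_le F' i n n.+1) //; last exact: root_sink.
by rewrite iterSr gF_mdf_i Hm'.
Qed.

Lemma mdf_root_other v : (forall t, iter t (gF F) v != i) -> rootF F' v = rootF F v.
Proof. by move=> Hv; rewrite /rootF (iter_agree Hag (fun s _ => Hv s)). Qed.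

End Mdf.

Section Rem.
Variables (G : E) (i : 'I_n).
Hypotheses (HG : forest G) (Hi : ~~ sink G i).

Let G' := rem G i.
Let Hag : forall u, u != i -> gF G' u = gF G u.
Proof. by move=> u Hu; rewrite gF_rem_ne. Qed.

Lemma rem_forest : forest G'.
Proof.
move: HG => /and3P[Hsub Ho Ha].
rewrite /forest sub_rem // outle1_rem //=; apply/forallP => v.
case: (boolP (fconnect (gF G) v i)) => Hc.
  case: (first_hit Hc) => s Hs Hmin.
  have Hsv : iter s (gF G') v = i by rewrite (iter_agree Hag Hmin).
  by apply: (@pigeon G' v s); rewrite Hsv sink_rem_i.
have /noreachP Hv := Hc.
have Hr : rootF G v != i.
  by apply: contraNneq Hi => <-; exact: root_sink.
rewrite /rootF (iter_agree Hag (fun s _ => Hv s)) sink_rem_ne //.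
exact: root_sink.
Qed.

Let Hm : forall t, iter t (gF G) (gF G i) != i.
Proof. move: HG => /and3P[_ _ Ha] t; exact: noreach_succ. Qed.

Lemma rem_noreach : ~~ fconnect (gF G') (gF G i) i.
Proof.
apply/noreachP => t; rewrite (iter_agree Hag (fun s _ => Hm s)); exact: Hm.
Qed.

Lemma rem_root : rootF G' (gF G i) = rootF G i.
Proof.
move: HG => /and3P[_ _ Ha].
by rewrite /rootF (iter_agree Hag (fun s _ => Hm s)) -/(rootF G _) rootF_g.
Qed.

End Rem.


Local Notation wt := (sg_weight W).

Lemma succ_nsink (F : E) v : ~~ sink F v -> succ F v = Some (gF F v).
Proof. by rewrite /sink /gF; case: (succ F v). Qed.

Lemma W0 a b : ~~ (0 < W a b) -> W a b = 0.
Proof. by move=> H; apply/eqP; rewrite eq_le Hpos andbT leNgt. Qed.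

Lemma root_reach (F : E) a b : acyc F -> fconnect (gF F) a b -> rootF F a = rootF F b.
Proof. by move=> Ha /iter_findex H; rewrite -H rootF_iter. Qed.

Section Entry.
Variables (i j : 'I_n).

Definition Dt (x : E * 'I_n) : R :=
  W i x.2 * wt x.1 * ((rootF x.1 x.2 == j)%:R - (rootF x.1 i == j)%:R).

Definition swc (x : E * 'I_n) : bool :=
  [&& forest x.1, ~~ sink x.1 i, 0 < W i x.2 & ~~ fconnect (gF x.1) x.2 i].

Definition phi (x : E * 'I_n) : E * 'I_n :=
  if swc x then (mdf x.1 i x.2, gF x.1 i) else x.

Lemma swc_phi x : swc x -> swc (phi x) /\ phi (phi x) = x.
Proof.
case: x => F m Hs; have := Hs; rewrite /swc /= => /and4P[HF Hi Hw Hnr].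
have /and3P[Hsub Ho Ha] := HF.
have HF' := mdf_forest HF Hw Hnr.
have Hm : forall t, iter t (gF F) (gF F i) != i by move=> t; exact: noreach_succ.
have Hag : forall u, u != i -> gF (mdf F i m) u = gF F u by move=> u Hu; rewrite gF_mdf_ne.
have Hnr' : ~~ fconnect (gF (mdf F i m)) (gF F i) i.
  by apply/noreachP => t; rewrite (iter_agree Hag (fun s _ => Hm s)).
have Hsw' : swc (mdf F i m, gF F i).
  rewrite /swc /= HF' nsink_mdf_i Hnr' andbT /=.
  by move: (subsetP Hsub _ (nsink_g Hi)); rewrite inE.
rewrite /phi Hs /= Hsw' /=; split => //.
by rewrite gF_mdf_i /mdf rem_mdf -/(mdf F i (gF F i)) mdf_self // succ_nsink.
Qed.

Lemma phi_invol x : phi (phi x) = x.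
Proof.
case Hs: (swc x); first by case: (swc_phi Hs).
by rewrite /phi Hs Hs.
Qed.

Lemma D_phi x : forest x.1 -> ~~ sink x.1 i -> Dt (phi x) = - Dt x.
Proof.
case: x => F m /= HF Hi; have /and3P[Hsub Ho Ha] := HF.
case Hs: (swc (F, m)); last first.
  rewrite /phi Hs; move: Hs; rewrite /swc /= HF Hi /= => /nandP[/W0 H0|/negbNE Hc].
    by rewrite /Dt /= H0 !mul0r oppr0.
  by rewrite /Dt /= (root_reach Ha Hc) subrr !mulr0 oppr0.
have := Hs; rewrite /swc /= => /and4P[_ _ Hw Hnr].
rewrite /phi Hs /Dt /=.
have Hm : forall t, iter t (gF F) (gF F i) != i by move=> t; exact: noreach_succ.
rewrite (mdf_root_other m Hm) rootF_g // (mdf_root_i HF Hw Hnr).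
have E1 := wt_mdf F i m.
have E2 := wt_mdf F i (gF F i); rewrite (mdf_self Ho (succ_nsink Hi)) in E2.
rewrite E1 E2; ring.
Qed.

Lemma part_b k : \sum_(F : E | forest F && (#|F| == k) && ~~ sink F i) \sum_m Dt (F, m) = 0.
Proof.
rewrite pair_big /=.
set S := (X in X = 0).
have HS : S = - S.
  rewrite {1}/S (reindex_inj (can_inj phi_invol)) /= -sumrN.
  apply: eq_big => [x|x].
    case Hs: (swc x); last by rewrite /phi Hs.
    case: (swc_phi Hs) => Hs' _; move: Hs'.
    case: x Hs => F m Hs; have -> : phi (F, m) = (mdf F i m, gF F i) by rewrite /phi Hs.
    move: Hs; rewrite /swc /= => /and4P[HF Hi _ _] /and4P[HF' Hi' _ _].
    rewrite HF HF' Hi Hi' !andbT card_mdf; congr (_ == k).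
    have Ho : outle1 F by case/and3P: HF.
    by rewrite -(card_mdf F i (gF F i)) (mdf_self Ho (succ_nsink Hi)).
  move=> /andP[/andP[/andP[HF _] Hi] _]; have := D_phi HF Hi; rewrite phi_invol -!surjective_pairing => ->; by rewrite opprK.
lra.
Qed.

End Entry.


Lemma part_a_m i j k m :
  \sum_(F : E | forest F && (#|F| == k) && sink F i) Dt i j (F, m) =
  \sum_(G : E | forest G && (#|G| == k.+1) && (succ G i == Some m))
     wt G * ((rootF G i == j)%:R - (i == j)%:R).
Proof.
rewrite (bigID (fun F : E => (0 < W i m) && ~~ fconnect (gF F) m i)) /=.
rewrite [X in _ + X]big1 ?addr0; last first.
  move=> F /andP[/andP[/andP[HF _] Hi] /nandP[/W0 H0|/negbNE Hc]].
    by rewrite /Dt /= H0 !mul0r.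
  case/and3P: HF => _ _ Ha.
  by rewrite /Dt /= (root_reach Ha Hc) subrr mulr0.
have Hfil : forall G : E,
  [&& forest (rem G i), (#|rem G i| == k), sink (rem G i) i & (0 < W i m) && ~~ fconnect (gF (rem G i)) m i]
    && (mdf (rem G i) i m == G) =
  [&& forest G, (#|G| == k.+1) & (succ G i == Some m)].
  move=> G; apply/idP/idP.
    case/andP => /and4P[HF Hk Hs /andP[Hw Hnr]] /eqP HG.
    rewrite -HG mdf_forest //= card_mdf rem_sink // (eqP Hk) eqxx /=.
    by rewrite succ_mdf_i.
  case/and3P => HG Hk /eqP Hs.
  have Hi : ~~ sink G i by rewrite /sink Hs.
  have Hg : gF G i = m by rewrite /gF Hs.
  have /and3P[Hsub Ho _] := HG.
  have HGe := mdf_self Ho Hs.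
  rewrite rem_forest //= sink_rem_i /=.
  rewrite -{1}HGe card_mdf eqSS in Hk; rewrite Hk /=.
  have Hnr := rem_noreach HG Hi; rewrite Hg in Hnr; rewrite Hnr andbT.
  have -> : 0 < W i m by move: (subsetP Hsub _ (succ_in Hs)); rewrite inE.
  by rewrite /mdf (rem_sink (sink_rem_i G i)) -/(mdf G i m) HGe eqxx.
rewrite (reindex_onto (fun G : E => rem G i) (fun F : E => mdf F i m)) /=; last first.
  by move=> F /andP[/andP[/andP[_ _] Hs] _]; rewrite rem_mdf rem_sink.
apply: eq_big => [G|G].
  by move: (Hfil G); rewrite !andbA.
move=> HH; have : [&& forest G, (#|G| == k.+1) & (succ G i == Some m)].
  by rewrite -Hfil; move: HH; rewrite !andbA.
move=> /and3P[HG Hk /eqP Hs].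
have Hi : ~~ sink G i by rewrite /sink Hs.
have Hg : gF G i = m by rewrite /gF Hs.
have /and3P[Hsub Ho _] := HG.
have Hr := rem_root HG Hi; rewrite Hg in Hr.
rewrite /Dt /= Hr (rootF_sinkv (sink_rem_i G i)).
have E1 := wt_mdf G i m; rewrite (mdf_self Ho Hs) in E1.
by rewrite E1.
Qed.

Lemma part_a i j k :
  \sum_(F : E | forest F && (#|F| == k) && sink F i) \sum_m Dt i j (F, m) =
  \sum_(G : E | forest G && (#|G| == k.+1) && ~~ sink G i)
     wt G * ((rootF G i == j)%:R - (i == j)%:R).
Proof.
rewrite exchange_big /=.
rewrite (partition_big (fun G : E => gF G i) predT) //=.
apply: eq_bigr => m _; rewrite part_a_m; apply: eq_bigl => G.
rewrite -!andbA; congr (_ && (_ && _)).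
rewrite /sink /gF; case: (succ G i) => [a|] //=.
Qed.


Lemma Qmat_E k i j : Qmat W k i j =
  \sum_(F : E | forest F && (#|F| == k)) wt F * (rootF F i == j)%:R.
Proof.
rewrite mxE big_mkcond [RHS]big_mkcond; apply: eq_bigr => F _.
rewrite inforest_forest; case HF: (forest F) => /=; last by [].
rewrite rooted_forest //; case: (#|F| == k) => //=.
by case: (rootF F i == j); rewrite ?mulr1 ?mulr0.
Qed.

Lemma sigma_E k : sigma W k = \sum_(F : E | forest F && (#|F| == k)) wt F.
Proof. by apply: eq_bigl => F; rewrite inforest_forest. Qed.

Lemma lap_row (Q : 'M[R]_n) i j : \sum_m (- laplacian W) i m * Q m j =
  \sum_m W i m * (Q m j - Q i j).
Proof.
rewrite (bigD1 i) //= [RHS](bigD1 i) //= Hloop subrr mulr0 add0r !mxE eqxx.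
have -> : \sum_(m | m != i) (- laplacian W) i m * Q m j =
          \sum_(m | m != i) W i m * Q m j.
  by apply: eq_bigr => m Hm; rewrite !mxE eq_sym (negbTE Hm) opprK.
rewrite [RHS](eq_bigr (fun m => W i m * Q m j - W i m * Q i j)); last first.
  by move=> m _; rewrite mulrBr.
by rewrite sumrB -mulr_suml mulNr addrC.
Qed.

Lemma entry k i j : Qmat W k.+1 i j = (- laplacian W *m Qmat W k + (sigma W k.+1)%:M) i j.
Proof.
rewrite [RHS]mxE [(_ *m _) i j]mxE [_%:M i j]mxE lap_row.
have -> : \sum_m W i m * (Qmat W k m j - Qmat W k i j) =
          \sum_(F : E | forest F && (#|F| == k)) \sum_m Dt i j (F, m).
  rewrite exchange_big /=; apply: eq_bigr => m _.
  rewrite !Qmat_E -sumrB mulr_sumr; apply: eq_bigr => F _.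
  by rewrite /Dt /=; ring.
rewrite (bigID (fun F : E => sink F i)) /= part_b addr0 part_a.
have HQ := Qmat_E k.+1 i j; rewrite (bigID (fun F : E => sink F i)) /= in HQ.
have HS := sigma_E k.+1; rewrite (bigID (fun F : E => sink F i)) /= in HS.
rewrite HQ HS.
rewrite [X in X + _ = _](eq_bigr (fun G : E => wt G * (i == j)%:R)); last first.
  by move=> G /andP[_ Hs]; rewrite rootF_sinkv.
rewrite -mulr_suml.
under [X in _ = X + _]eq_bigr do rewrite mulrBr.
rewrite sumrB -mulr_suml -mulr_natr.
ring.
Qed.



Lemma card_forest (G : E) : outle1 G -> #|G| = #|[set v | ~~ sink G v]|.
Proof.
move=> Ho.
have HG : G = [set (v, gF G v) | v in [set v | ~~ sink G v]].
  apply/setP => [[u w]]; apply/idP/imsetP => [H|[v]].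
    have Hs : succ G u == Some w by rewrite succ_some.
    exists u; first by rewrite inE /sink (eqP Hs).
    by rewrite /gF (eqP Hs).
  by rewrite inE => Hv [-> ->]; exact: nsink_g.
by rewrite {1}HG card_imset // => a b [].
Qed.

Lemma sink_count (G : E) : \sum_(v : 'I_n) (sink G v)%:R = (#|[set v | sink G v]|)%:R :> R.
Proof.
rewrite (bigID (sink G)) /= [X in _ + X]big1 ?addr0; last by move=> v /negbTE ->.
rewrite (eq_bigr (fun _ => 1)); last by move=> v ->.
by rewrite sumr_const cardsE.
Qed.

Lemma trace_Q k : \tr (Qmat W k) = sigma W k * (n%:R - k%:R).
Proof.
rewrite /mxtrace.
under eq_bigr do rewrite Qmat_E.
rewrite exchange_big /= sigma_E mulr_suml; apply: eq_bigr => G /andP[HG /eqP Hk].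
rewrite -mulr_sumr; congr (_ * _).
have /and3P[_ Ho Ha] := HG.
rewrite (eq_bigr (fun v => (sink G v)%:R)); last first.
  move=> v _; suff -> : (rootF G v == v) = sink G v by [].
  apply/eqP/idP => [H|H]; last by rewrite rootF_sinkv.
  by rewrite -H; exact: root_sink.
rewrite sink_count -Hk (card_forest Ho).
have Hc := cardsC [set v | sink G v]; rewrite card_ord in Hc.
have Hc' : ~: [set v | sink G v] = [set v | ~~ sink G v] by apply/setP => v; rewrite !inE.
by apply/eqP; rewrite eq_sym subr_eq -natrD -Hc' Hc.
Qed.

End Aux.

Theorem proposition4 (R : realFieldType) (n : nat) (W : 'M[R]_n)
  (Hn : (1 < n)%N)
  (Hloop : forall i, W i i = 0)
  (Hpos : forall i j, 0 <= W i j) :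
  forall k : nat,
    Qmat W k.+1 = - laplacian W *m Qmat W k + (sigma W k.+1)%:M /\
    sigma W k.+1 = \tr (laplacian W *m Qmat W k) / (k.+1)%:R.
Proof.
move=> k.
have H1 : Qmat W k.+1 = - laplacian W *m Qmat W k + (sigma W k.+1)%:M.
  by apply/matrixP => i j; exact: entry.
split => //.
have := trace_Q W k.+1; rewrite H1 mxtraceD mxtrace_scalar mulNmx.
rewrite raddfN /= => Ht.
have Hk : (k.+1)%:R != 0 :> R by rewrite pnatr_eq0.
apply: (mulIf Hk); rewrite mulfVK //.
rewrite -mulr_natr in Ht; lra.
Qed.
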